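(* Let $n\in\mathbb N$ and let $\hat A\in\mathcal A^n$ with $\langle n|\hat A|n\rangle\neq0$. Then there exists $t_0>0$ such that $\mathcal V^{\mathrm{norm}}_t[\hat A]\in\mathcal D^n$ for all $t\ge t_0$.
   Context: Let $\mathcal H=L^2(\mathbb R)$ with annihilation operator $\hat a$, $\hat n=\hat a^\dagger\hat a$ and Fock basis $\{|k\rangle\}$. A quasi-state is a Hermitian trace-class operator of unit trace; a state is a positive semi-definite quasi-state. With $\hat P_n=\sum_{k=0}^n|k\rangle\langle k|$, $\mathcal A^n$ is the set of quasi-states $\hat A$ with $\hat P_n\hat A\hat P_n=\hat A$, and $\mathcal D^n$ the set of states in $\mathcal A^n$. For $t>0$ and such $\hat A$, the Vertigo map is $\mathcal V_t[\hat A]=\sum_{k\ge0}\frac{(t-1)^k}{k!}t^{\hat n/2}\hat a^k\hat A\hat a^{\dagger k}t^{\hat n/2}$ (finite sum), equivalently characterized on Wigner functions $W_{\hat A}(\alpha)=\frac2\pi\mathrm{Tr}[\hat A\hat D(\alpha)(-1)^{\hat n}\hat D(\alpha)^\dagger]$ (with $\hat D(\alpha)=\exp(\alpha\hat a^\dagger-\alpha^*\hat a)$) by $W_{\mathcal V_t[\hat A]}(\alpha)=W_{\hat A}(\sqrt t\alpha)e^{2(t-1)|\alpha|^2}$; and $\mathcal V^{\mathrm{norm}}_t[\hat A]=\mathcal V_t[\hat A]/\mathrm{Tr}\,\mathcal V_t[\hat A]$ whenever this trace is non-zero. *)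

(* Defs.v *)
From HB Require Import structures.
From mathcomp Require Import all_boot all_order all_algebra.
From mathcomp Require Import reals.
From mathcomp Require Import complex.
Set Implicit Arguments. Unset Strict Implicit. Unset Printing Implicit Defensive.
Import Order.TTheory GRing.Theory Num.Theory.
Local Open Scope ring_scope.
Local Open Scope complex_scope.

(* Operators B with P_n B P_n = B are identified with their matrix
   (<i|B|j>)_{0<=i,j<=n} in the Fock basis |0>,...,|n>. *)

Definition adjmx (R : rcfType) (m p : nat) (M : 'M[R[i]]_(m, p)) : 'M[R[i]]_(p, m) :=
  \matrix_(i, j) (M j i)^*.

(* truncated annihilation operator: a|j> = sqrt j |j-1>, i.e. <i|a|j> = sqrt j [j = i+1] *)
Definition ann (R : rcfType) (n : nat) : 'M[R[i]]_n.+1 :=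
  \matrix_(i, j) (if (j : nat) == i.+1 then (Num.sqrt (j%:R : R))%:C else 0).

(* t^(n^/2) restricted to span{|0>,...,|n>}: <i|t^(n^/2)|j> = t^(i/2) [i = j] *)
Definition tpow (R : rcfType) (n : nat) (t : R) : 'M[R[i]]_n.+1 :=
  \matrix_(i, j) (if i == j then (Num.sqrt t ^+ i)%:C else 0).

(* Vertigo map; the terms with k > n vanish since a^(n+1) P_n = 0. *)
Definition vertigo (R : rcfType) (n : nat) (t : R) (A : 'M[R[i]]_n.+1) : 'M[R[i]]_n.+1 :=
  \sum_(k < n.+1)
    (((t - 1) ^+ k / (k`!)%:R)%:C *:
      (tpow n t *m (ann R n ^+ k) *m A *m adjmx (ann R n ^+ k) *m tpow n t)).

Definition vertigo_norm (R : rcfType) (n : nat) (t : R) (A : 'M[R[i]]_n.+1) : 'M[R[i]]_n.+1 :=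
  (\tr (vertigo t A))^-1 *: vertigo t A.

Definition hermitian (R : rcfType) (n : nat) (M : 'M[R[i]]_n.+1) : Prop :=
  adjmx M = M.

(* A^n : Hermitian, unit trace *)
Definition quasi_state_n (R : rcfType) (n : nat) (M : 'M[R[i]]_n.+1) : Prop :=
  hermitian M /\ \tr M = 1.

Definition psd (R : rcfType) (n : nat) (M : 'M[R[i]]_n.+1) : Prop :=
  forall v : 'cV[R[i]]_n.+1, 0 <= (adjmx v *m M *m v) 0 0.

(* D^n : positive semi-definite elements of A^n *)
Definition state_n (R : rcfType) (n : nat) (M : 'M[R[i]]_n.+1) : Prop :=
  quasi_state_n M /\ psd M.

(* Main.v *)
Require Import Defs.
From HB Require Import structures.
From mathcomp Require Import all_boot all_order all_algebra.
From mathcomp Require Import reals.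
From mathcomp Require Import complex.
From mathcomp Require Import ring lra zify.
Import Order.TTheory GRing.Theory Num.Theory.
Local Open Scope ring_scope.
Set Implicit Arguments. Unset Strict Implicit. Unset Printing Implicit Defensive.
Local Open Scope complex_scope.
Local Open Scope ring_scope.

Section S.
Variable R : realType.
Local Notation C := R[i].

Lemma realC (x : R) : (x%:C : C) \is Num.real.
Proof. by rewrite complex_real. Qed.

Lemma conjR (x : R) : (x%:C : C)^* = x%:C.
Proof. exact/conj_Creal/realC. Qed.

Lemma realCP (x : C) : x \is Num.real -> x = ((complex.Re x : R)%:C : C).
Proof. by case: x => a b; rewrite complex_real => /eqP /= ->. Qed.

Lemma conjcE (x : C) : conjc x = x^*.
Proof. by []. Qed.

Lemma adjmxK m p (M : 'M[C]_(m,p)) : adjmx (adjmx M) = M.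
Proof. by apply/matrixP=> i j; rewrite !mxE !conjcE conjCK. Qed.

Lemma adjmxM m p q (M : 'M[C]_(m,p)) (N : 'M[C]_(p,q)) :
  adjmx (M *m N) = adjmx N *m adjmx M.
Proof.
apply/matrixP=> i j; rewrite !mxE conjcE rmorph_sum; apply: eq_bigr => k _.
by rewrite !mxE !conjcE rmorphM mulrC.
Qed.

Lemma adjmxZ m p (c : C) (M : 'M[C]_(m,p)) : adjmx (c *: M) = c^* *: adjmx M.
Proof. by apply/matrixP=> i j; rewrite !mxE !conjcE rmorphM. Qed.

Lemma adjmx_sum m p (I : finType) (F : I -> 'M[C]_(m,p)) :
  adjmx (\sum_i F i) = \sum_i adjmx (F i).
Proof.
apply/matrixP=> i j; rewrite !mxE !summxE conjcE rmorph_sum; apply: eq_bigr => k _.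
by rewrite !mxE conjcE.
Qed.

Variable n : nat.

Lemma adjmx_tpow (t : R) : adjmx (tpow n t) = tpow n t.
Proof.
apply/matrixP=> i j; rewrite !mxE conjcE eq_sym; case: eqP => [->|_]; last by rewrite rmorph0.
by rewrite conjR.
Qed.

Lemma tpow_diag (t : R) : tpow n t = diag_mx (\row_(i < n.+1) (Num.sqrt t ^+ i)%:C).
Proof. by apply/matrixP=> i j; rewrite !mxE; case: eqP => [->|]; rewrite ?mulr1n ?mulr0n. Qed.

Definition Y (A : 'M[C]_n.+1) (k : nat) := ann R n ^+ k *m A *m adjmx (ann R n ^+ k).

Lemma tpow_conj (t : R) (M : 'M[C]_n.+1) i j :
  (tpow n t *m M *m tpow n t) i j =
  (Num.sqrt t ^+ i)%:C * M i j * (Num.sqrt t ^+ j)%:C.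
Proof. by rewrite tpow_diag mul_diag_mx mul_mx_diag !mxE. Qed.

Lemma vertigoE (t : R) A i j :
  vertigo t A i j = \sum_(k < n.+1) ((t - 1) ^+ k / (k`!)%:R)%:C *
     ((Num.sqrt t ^+ i)%:C * Y A k i j * (Num.sqrt t ^+ j)%:C).
Proof.
rewrite /vertigo summxE; apply: eq_bigr => k _.
by rewrite -tpow_conj /Y !mulmxA [LHS]mxE.
Qed.

Lemma vertigo_herm (t : R) (A : 'M[C]_n.+1) : adjmx A = A -> adjmx (vertigo t A) = vertigo t A.
Proof.
move=> HA; rewrite /vertigo adjmx_sum; apply: eq_bigr => k _.
rewrite adjmxZ conjR !adjmxM adjmxK HA adjmx_tpow !mulmxA.
done.
Qed.

Lemma vertigoZ (t : R) (c : C) (A : 'M[C]_n.+1) : vertigo t (c *: A) = c *: vertigo t A.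
Proof.
rewrite /vertigo scaler_sumr; apply: eq_bigr => k _.
rewrite scalerA [c * _]mulrC -scalerA; congr (_ *: _).
by rewrite -scalemxAr -!scalemxAl. Qed.

Lemma annX_0 k (i l : 'I_n.+1) : (l : nat) != (i + k)%N -> (ann R n ^+ k) i l = 0.
Proof.
elim: k i l => [|k IH] i l.
  rewrite addn0 expr0 mxE => H.
  by rewrite (negbTE (_ : i != l)) ?mulr0n //; apply: contra H => /eqP ->.
rewrite exprS -mulmxE mxE => H; apply: big1 => m _.
rewrite mxE; case: eqP => [Hm|_]; last by rewrite mul0r.
by rewrite IH ?mulr0 // Hm addSnnS.
Qed.

Lemma annX_ne0 k (i l : 'I_n.+1) : (l : nat) = (i + k)%N -> (ann R n ^+ k) i l != 0.
Proof.
elim: k i l => [|k IH] i l.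
  rewrite addn0 expr0 mxE => /val_inj ->. by rewrite eqxx mulr1n oner_eq0.
move=> H. have Hi : (i.+1 < n.+1)%N by have := ltn_ord l; rewrite H; lia.
set m0 : 'I_n.+1 := Ordinal Hi.
rewrite exprS -mulmxE mxE (bigD1 m0) //= big1 ?addr0.
  rewrite mulf_neq0 //.
    rewrite mxE /= eqxx fmorph_eq0 sqrtr_eq0 -ltNge ltr0Sn //.
  by apply: IH; rewrite /= H addSnnS.
move=> m Hm; rewrite mxE; case: eqP => [E|_]; last by rewrite mul0r.
by move: Hm; rewrite (_ : m = m0) ?eqxx //; apply: val_inj.
Qed.

Lemma Y0 A k (i j : 'I_n.+1) : (n < i + k)%N || (n < j + k)%N -> Y A k i j = 0.
Proof.
move=> H; rewrite /Y mxE; apply: big1 => l _.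
case/orP: H => H.
  rewrite mxE big1 ?mul0r // => l' _; rewrite annX_0 ?mul0r //.
  by apply/negP => /eqP E; have := ltn_ord l'; rewrite E; lia.
rewrite [X in _ * X]mxE conjcE annX_0 ?rmorph0 ?mulr0 //.
by apply/negP => /eqP E; have := ltn_ord l; rewrite E; lia.
Qed.

Lemma Ydiag A (i : 'I_n.+1) : Y A (n - i) i i =
  (ann R n ^+ (n - i)) i ord_max * A ord_max ord_max * ((ann R n ^+ (n - i)) i ord_max)^*.
Proof.
rewrite /Y mxE (bigD1 ord_max) //= big1 ?addr0.
  rewrite !mxE conjcE (bigD1 ord_max) //= big1 ?addr0 //.
  move=> l Hl; rewrite annX_0 ?mul0r //.
  apply: contra Hl => /eqP E; apply/eqP/val_inj; rewrite /= E; have := ltn_ord i; lia.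
move=> l Hl; rewrite [X in _ * X]mxE conjcE annX_0 ?rmorph0 ?mulr0 //.
apply: contra Hl => /eqP E; apply/eqP/val_inj; rewrite /= E; have := ltn_ord i; lia.
Qed.

Lemma conjC_sum (I : Type) (r : seq I) (P : pred I) (F : I -> C) :
  (\sum_(i <- r | P i) F i)^* = \sum_(i <- r | P i) (F i)^*.
Proof. exact: rmorph_sum. Qed.
Lemma conjCM (x y : C) : (x * y)^* = x^* * y^*.
Proof. exact: rmorphM. Qed.

Lemma conjCV (x : C) : (x^-1)^* = (x^*)^-1.
Proof. exact: fmorphV. Qed.

Lemma normC_def (x : C) : `|x| = (Normc.normc x)%:C.
Proof. by []. Qed.

Lemma amgm (x y : C) : `|x| * `|y| *+ 2 <= `|x| ^+ 2 + `|y| ^+ 2.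
Proof.
rewrite !normC_def -!rmorphXn -rmorphM -rmorphMn -rmorphD lecR.
set a := Normc.normc x; set b := Normc.normc y; rewrite mulr2n; have := sqr_ge0 (a - b); rewrite sqrrB mulr2n; lra.
Qed.

Lemma dom_psd (M : 'M[C]_n.+1) : adjmx M = M ->
  (forall i, \sum_(j | j != i) `|M i j| <= M i i) -> psd M.
Proof.
move=> HM Hd v.
have HMji : forall i j, M j i = (M i j)^*.
  by move=> i j; rewrite -{1}HM mxE conjcE.
pose x i j := (v i 0)^* * M i j * v j 0.
have ES : (adjmx v *m M *m v) 0 0 = \sum_i \sum_j x i j.
  rewrite mxE exchange_big; apply: eq_bigr => j _; rewrite mxE mulr_suml.
  by apply: eq_bigr => i _; rewrite mxE conjcE.
rewrite ES.
have Sreal : \sum_i \sum_j x i j \is Num.real.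
  apply/CrealP; rewrite conjC_sum exchange_big; apply: eq_bigr => j _.
  rewrite conjC_sum; apply: eq_bigr => i _.
  by rewrite /x !conjCM conjCK -HMji; ring.
have Esplit : \sum_i \sum_j x i j = \sum_i x i i + \sum_i \sum_(j | j != i) x i j.
  by rewrite -big_split /=; apply: eq_bigr => i _; rewrite (bigD1 i).
set Dg := \sum_i x i i in Esplit; set O := \sum_i \sum_(j | j != i) x i j in Esplit.
have Mii : forall i, 0 <= M i i.
  by move=> i; apply: le_trans (Hd i); apply: sumr_ge0 => j _.
have EDg : Dg = \sum_i M i i * `|v i 0| ^+ 2.
  by apply: eq_bigr => i _; rewrite /x normCK; ring.
have Dg0 : 0 <= Dg by rewrite EDg; apply: sumr_ge0 => i _; rewrite mulr_ge0 // exprn_ge0.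
have Oreal : O \is Num.real.
  have -> : O = \sum_i \sum_j x i j - Dg by rewrite Esplit addrC addKr.
  by rewrite rpredB // ger0_real.
have HO : `|O| <= Dg.
  rewrite -(ler_pMn2r (_ : (0 < 2)%N)) //.
  have H1 : `|O| <= \sum_i \sum_(j | j != i) `|M i j| * (`|v i 0| * `|v j 0|).
    apply: le_trans (ler_norm_sum _ _ _) _; apply: ler_sum => i _.
    apply: le_trans (ler_norm_sum _ _ _) _; apply: ler_sum => j _.
    by rewrite /x !normrM norm_conjC; rewrite le_eqVlt; apply/orP; left; apply/eqP; ring.
  set F := \sum_i \sum_(j | j != i) `|M i j| * `|v i 0| ^+ 2.
  have H2 : `|O| *+ 2 <= F + F.
    apply: le_trans (_ : (\sum_i \sum_(j | j != i) `|M i j| * (`|v i 0| ^+ 2 + `|v j 0| ^+ 2)) <= _).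
      apply: le_trans (ler_wMn2r 2 H1) _.
      rewrite -sumrMnl; apply: ler_sum => i _; rewrite -sumrMnl; apply: ler_sum => j _.
      by rewrite -mulrnAr ler_wpM2l // amgm.
    have -> : \sum_i \sum_(j | j != i) `|M i j| * (`|v i 0| ^+ 2 + `|v j 0| ^+ 2)
       = F + \sum_i \sum_(j | j != i) `|M i j| * `|v j 0| ^+ 2.
      rewrite -big_split; apply: eq_bigr => i _; rewrite -big_split.
      by apply: eq_bigr => j _; rewrite mulrDr.
    rewrite lerD2l le_eqVlt; apply/orP; left; apply/eqP.
    rewrite /F (eq_bigr (fun i => \sum_j (if j != i then `|M i j| * `|v j 0| ^+ 2 else 0))); last first.
      by move=> i _; rewrite big_mkcond.
    rewrite exchange_big /=; apply: eq_bigr => i _; rewrite [RHS]big_mkcond; apply: eq_bigr => j _.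
    by rewrite eq_sym HMji norm_conjC.
  have H3 : F <= Dg.
    rewrite EDg; apply: ler_sum => i _; rewrite -mulr_suml.
    by apply: ler_wpM2r; [rewrite exprn_ge0 | exact: Hd].
  by rewrite mulr2n; apply: le_trans H2 _; apply: lerD.
rewrite Esplit.
have h : - `|O| <= O by rewrite lerNl -normrN real_ler_norm // rpredN.
apply: le_trans (_ : 0 <= Dg - `|O|) _; first by rewrite subr_ge0.
by rewrite lerD2l.
Qed.

End S.

Section Est.
Variable R : realType.
Local Notation C := R[i].
Variable n : nat.
Variable B : 'M[C]_n.+1.

Local Notation nc := (@Normc.normc R).

Lemma nc_ge0 (x : C) : 0 <= nc x.
Proof. by rewrite -ler0c -normC_def. Qed.

Lemma ncR (x : R) : nc (x%:C) = `|x|.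
Proof. by rewrite /Normc.normc /= expr0n addr0 sqrtr_sqr. Qed.

Lemma nc_sum (I : finType) (P : pred I) (F : I -> C) :
  nc (\sum_(i | P i) F i) <= \sum_(i | P i) nc (F i).
Proof.
rewrite -lecR -normC_def rmorph_sum; apply: le_trans (ler_norm_sum _ _ _) _.
by apply: ler_sum => i _; rewrite normC_def.
Qed.

Definition cc (t : R) (k : nat) : R := (t - 1) ^+ k / (k`!)%:R.

Lemma cc_bound (t : R) k : 1 <= t -> 0 <= cc t k /\ cc t k <= t ^+ k.
Proof.
move=> t1; have h0 : 0 <= (t - 1) ^+ k by rewrite exprn_ge0 // subr_ge0.
split; first by rewrite /cc divr_ge0.
apply: le_trans (_ : (t-1)^+k <= _); last first.
  by rewrite lerXn2r // ?nnegrE ?subr_ge0 ?(le_trans ler01) // lerBlDr lerDl.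
rewrite /cc ler_pdivrMr ?ltr0n ?fact_gt0 // ler_peMr // ler1n fact_gt0 //.
Qed.

Lemma sqrt_facts (t : R) : 1 <= t ->
  [/\ 1 <= Num.sqrt t, 0 <= Num.sqrt t & t = Num.sqrt t ^+ 2].
Proof.
move=> t1; split.
- by rewrite -sqrtr1 ler_sqrt // (le_trans ler01).
- exact: sqrtr_ge0.
- by rewrite sqr_sqrtr // (le_trans ler01).
Qed.

Lemma off_bound (t : R) (i j : 'I_n.+1) : 1 <= t -> i != j ->
  Num.sqrt t * nc (vertigo t B i j) <=
  Num.sqrt t ^+ (2 * n) * \sum_(k < n.+1) nc (Y B k i j).
Proof.
move=> t1 nij; have [s1 s0 ts] := sqrt_facts t1; set s := Num.sqrt t in s1 s0 ts *.
rewrite vertigoE.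
apply: le_trans (ler_wpM2l s0 (nc_sum _ _)) _.
rewrite !mulr_sumr; apply: ler_sum => k _.
have [c0 c1] := cc_bound k t1.
rewrite !Normc.normcM !ncR !ger0_norm ?exprn_ge0 //.
case: (eqVneq (Y B k i j) 0) => [->|nz]; first by rewrite Normc.normc0 !(mulr0, mul0r).
have : ~~ ((n < i + k)%N || (n < j + k)%N).
  by apply: contra nz => H; apply/eqP; exact: Y0 H.
rewrite negb_or -!leqNgt => /andP[hi hj].
have c2 : cc t k <= s ^+ (2 * k) by rewrite exprM -ts.
apply: le_trans (_ : s * (s ^+ (2 * k) * (s ^+ i * nc (Y B k i j) * s ^+ j)) <= _).
  apply: ler_wpM2l => //; apply: ler_wpM2r => //.
  by rewrite mulr_ge0 ?exprn_ge0 // mulr_ge0 ?exprn_ge0 ?nc_ge0.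
have -> : s * (s ^+ (2 * k) * (s ^+ i * nc (Y B k i j) * s ^+ j)) =
   s ^+ (1 + 2 * k + i + j) * nc (Y B k i j) by rewrite !exprD expr1; ring.
apply: ler_wpM2r; first exact: nc_ge0.
apply: ler_weXn2l => //.
have : (i : nat) != j by [].
lia.
Qed.

Definition kmo (i : 'I_n.+1) : 'I_n.+1 := Ordinal (leq_ltn_trans (leq_subr i n) (ltnSn n)).

Definition vterm (t : R) (i j k : 'I_n.+1) : C :=
  (cc t k)%:C * ((Num.sqrt t ^+ i)%:C * Y B k i j * (Num.sqrt t ^+ j)%:C).

Lemma diag_split (t : R) i :
  vertigo t B i i = vterm t i i (kmo i) + \sum_(k | k != kmo i) vterm t i i k.
Proof. by rewrite vertigoE (bigD1 (kmo i)). Qed.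

Lemma diag_err (t : R) (i : 'I_n.+1) : 1 <= t ->
  Num.sqrt t ^+ 2 * nc (\sum_(k | k != kmo i) vterm t i i k) <=
  Num.sqrt t ^+ (2 * n) * \sum_(k < n.+1) nc (Y B k i i).
Proof.
move=> t1; have [s1 s0 ts] := sqrt_facts t1; set s := Num.sqrt t in s1 s0 ts *.
have s20 : 0 <= s ^+ 2 by rewrite exprn_ge0.
apply: le_trans (ler_wpM2l s20 (nc_sum _ _)) _.
rewrite [X in _ <= _ * X](bigD1 (kmo i)) //= mulrDr.
apply: ler_wpDl; first by rewrite mulr_ge0 ?exprn_ge0 ?nc_ge0.
rewrite !mulr_sumr; apply: ler_sum => k Hk.
have [c0 c1] := cc_bound k t1.
rewrite /vterm !Normc.normcM !ncR !ger0_norm ?exprn_ge0 //.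
case: (eqVneq (Y B k i i) 0) => [->|nz]; first by rewrite Normc.normc0 !(mulr0, mul0r).
have : ~~ ((n < i + k)%N || (n < i + k)%N).
  by apply: contra nz => H; apply/eqP; exact: Y0 H.
rewrite orbb -leqNgt => hi.
have hk : (k : nat) != (n - i)%N by [].
have c2 : cc t k <= s ^+ (2 * k) by rewrite exprM -ts.
apply: le_trans (_ : s ^+ 2 * (s ^+ (2 * k) * (s ^+ i * nc (Y B k i i) * s ^+ i)) <= _).
  apply: ler_wpM2l => //; apply: ler_wpM2r => //.
  by rewrite mulr_ge0 ?exprn_ge0 // mulr_ge0 ?exprn_ge0 ?nc_ge0.
have -> : s ^+ 2 * (s ^+ (2 * k) * (s ^+ i * nc (Y B k i i) * s ^+ i)) =
   s ^+ (2 + 2 * k + i + i) * nc (Y B k i i) by rewrite !exprD; ring.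
apply: ler_wpM2r; first exact: nc_ge0.
apply: ler_weXn2l => //.
lia.
Qed.

Lemma diag_main (t : R) (i : 'I_n.+1) : 1 <= t -> B ord_max ord_max = 1 ->
  vterm t i i (kmo i) =
  (cc t (n - i) * t ^+ i * nc ((ann R n ^+ (n - i)) i ord_max) ^+ 2)%:C.
Proof.
move=> t1 HB; have [s1 s0 ts] := sqrt_facts t1; set s := Num.sqrt t in s1 s0 ts *.
have ti : t ^+ i = s ^+ i * s ^+ i by rewrite -exprD addnn -mul2n exprM -ts.
rewrite /vterm Ydiag HB mulr1 -normCK normC_def -!rmorphXn -!rmorphM ti /=.
by congr (_%:C); ring.
Qed.

Lemma main_lb (t : R) (i : 'I_n.+1) : 2 <= t ->
  t ^+ n <= cc t (n - i) * t ^+ i * (2 ^+ (n - i) * (n - i)`!%:R).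
Proof.
move=> t2; set m := (n - i)%N.
have e : (t - 1) ^+ m = cc t m * m`!%:R.
  by rewrite /cc divfK // pnatr_eq0 -lt0n fact_gt0.
have -> : cc t m * t ^+ i * (2 ^+ m * m`!%:R) = (2 * (t - 1)) ^+ m * t ^+ i.
  by rewrite exprMn e; ring.
have -> : t ^+ n = t ^+ m * t ^+ i by rewrite -exprD subnK // -ltnS.
apply: ler_wpM2r; first by rewrite exprn_ge0 // (le_trans _ t2).
by rewrite lerXn2r // ?nnegrE; [lra | lra | lra].
Qed.

Definition wgt (i : 'I_n.+1) : R := nc ((ann R n ^+ (n - i)) i ord_max) ^+ 2.
Definition Lc (i : 'I_n.+1) : R := 2 ^+ (n - i) * (n - i)`!%:R.
Definition Kd (i : 'I_n.+1) : R := \sum_(k < n.+1) nc (Y B k i i).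
Definition Ko (i : 'I_n.+1) : R := \sum_(j | j != i) \sum_(k < n.+1) nc (Y B k i j).
Definition T0 (i : 'I_n.+1) : R := (2 + Lc i * (Ko i + Kd i) / wgt i) ^+ 2.

Lemma wgt_gt0 i : 0 < wgt i.
Proof.
rewrite /wgt exprn_gt0 // lt_def nc_ge0 andbT.
apply/negP => /eqP /Normc.eq0_normc /eqP; apply/negP; apply: annX_ne0.
by rewrite /= subnKC // -ltnS.
Qed.

Lemma Lc_gt0 i : 0 < Lc i.
Proof. by rewrite /Lc mulr_gt0 ?exprn_gt0 ?ltr0n ?fact_gt0. Qed.

Lemma Kd_ge0 i : 0 <= Kd i.
Proof. by apply: sumr_ge0 => k _; exact: nc_ge0. Qed.
Lemma Ko_ge0 i : 0 <= Ko i.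
Proof. by apply: sumr_ge0 => j _; apply: sumr_ge0 => k _; exact: nc_ge0. Qed.

Lemma T0_ge0 i : 0 <= T0 i.
Proof.
move: (Kd_ge0 i) (Ko_ge0 i) (Lc_gt0 i) (wgt_gt0 i) => h1 h2 h3 h4.
rewrite /T0 exprn_ge0 //; apply: addr_ge0 => //; apply: divr_ge0; [apply: mulr_ge0; [exact: ltW | exact: addr_ge0] | exact: ltW].
Qed.

Lemma dom_i (t : R) (i : 'I_n.+1) : adjmx B = B -> B ord_max ord_max = 1 -> T0 i <= t ->
  \sum_(j | j != i) `|vertigo t B i j| < vertigo t B i i.
Proof.
move=> HB HB1 tT.
have w0 := wgt_gt0 i; have L0 := Lc_gt0 i.
have Kd0 := Kd_ge0 i; have Ko0 := Ko_ge0 i.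
set q := Lc i * (Ko i + Kd i) / wgt i.
have q0 : 0 <= q by apply: divr_ge0; [apply: mulr_ge0; [exact: ltW | exact: addr_ge0] | exact: ltW].
have qw : q * wgt i = Lc i * (Ko i + Kd i) by rewrite /q divfK // gt_eqF.
have t0 : 0 <= t := le_trans (T0_ge0 i) tT.
have sq : 2 + q <= Num.sqrt t.
  by rewrite -(ger0_norm (_ : 0 <= 2 + q)) ?addr_ge0 // -sqrtr_sqr ler_sqrt.
have t2 : 2 <= t.
  have := sqr_sqrtr t0; move: sq; set s := Num.sqrt t => sq st; nra.
have t1 : 1 <= t by lra.
have [s1 s0 ts] := sqrt_facts t1; set s := Num.sqrt t in s1 s0 ts sq *.
set V := vertigo t B.
have HV : adjmx V = V := vertigo_herm t HB.
have Vreal : V i i \is Num.real.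
  by apply/CrealP; rewrite -conjcE -{2}HV mxE.
set E := \sum_(k | k != kmo i) vterm t i i k.
set M := cc t (n - i) * t ^+ i * wgt i.
have VE : V i i = M%:C + E by rewrite /V diag_split diag_main.
have Ereal : E \is Num.real.
  have -> : E = V i i - M%:C by rewrite VE addrC addKr.
  by rewrite rpredB // realC.
have lowC : ((M - nc E)%:C : C) <= V i i.
  rewrite rmorphB /= -normC_def VE lerD2l.
  by rewrite lerNl -normrN real_ler_norm // rpredN.
have sumC : \sum_(j | j != i) `|V i j| = (\sum_(j | j != i) nc (V i j))%:C.
  by rewrite rmorph_sum.
rewrite sumC; apply: lt_le_trans lowC; rewrite ltcR.
set o := \sum_(j | j != i) nc (V i j); set e := nc E.
have e0 : 0 <= e := nc_ge0 E.
have f1 : s * o <= s ^+ (2 * n) * Ko i.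
  rewrite /o /Ko mulr_sumr [X in _ <= X]mulr_sumr; apply: ler_sum => j Hj.
  by apply: off_bound => //; rewrite eq_sym.
have f2 : s ^+ 2 * e <= s ^+ (2 * n) * Kd i := diag_err i t1.
have f3 : s ^+ (2 * n) <= cc t (n - i) * t ^+ i * Lc i.
  by rewrite exprM -ts; exact: main_lb.
set X := s ^+ (2 * n) in f1 f2 f3.
have X0 : 0 < X by rewrite exprn_gt0 // (lt_le_trans ltr01 s1).
have g1 : s * Lc i * o <= Lc i * X * Ko i.
  nra.
have g2 : s * Lc i * e <= Lc i * X * Kd i.
  have : s * e <= s ^+ 2 * e by rewrite ler_wpM2r // expr2 ler_peMr // (le_trans ler01).
  nra.
have g3 : s * X * wgt i <= s * Lc i * M.
  have h := ler_wpM2l s0 (ler_wpM2r (ltW w0) f3).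
  have -> : s * X * wgt i = s * (X * wgt i) by ring.
  apply: le_trans h _; rewrite le_eqVlt; apply/orP; left; apply/eqP; rewrite /M; ring.
have g4 : (2 + q) * X * wgt i <= s * X * wgt i.
  by rewrite -!mulrA; apply: ler_wpM2r => //; rewrite ltW // mulr_gt0.
have g5 : q * wgt i * X = Lc i * (Ko i + Kd i) * X by rewrite qw.
suff : 0 < s * Lc i * (M - e - o).
  move=> h; have : 0 < M - e - o by move: h; rewrite pmulr_rgt0 // mulr_gt0 // (lt_le_trans ltr01 s1).
  lra.
nra.
Qed.

Lemma core : adjmx B = B -> B ord_max ord_max = 1 ->
  forall t : R, 1 + \sum_i T0 i <= t ->
  0 < \tr (vertigo t B) /\ psd (vertigo t B).
Proof.
move=> HB HB1 t tt.
have Ti : forall i, T0 i <= t.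
  move=> i; apply: le_trans tt; apply: le_trans (_ : \sum_j T0 j <= _); last by rewrite lerDr.
  by rewrite (bigD1 i) //= lerDl sumr_ge0 // => j _; exact: T0_ge0.
have Vpos : forall i, 0 < vertigo t B i i.
  move=> i; apply: le_lt_trans (dom_i HB HB1 (Ti i)).
  by apply: sumr_ge0 => j _.
split.
  rewrite /mxtrace (bigD1 ord0) //=; apply: lt_le_trans (Vpos ord0) _.
  by rewrite lerDl sumr_ge0 // => j _; exact: ltW.
apply: dom_psd; first exact: vertigo_herm.
by move=> i; apply: ltW; exact: dom_i.
Qed.

End Est.

Theorem lemma5 (R : realType) (n : nat) (A : 'M[R[i]]_n.+1) :
  quasi_state_n A -> A ord_max ord_max != 0 ->
  exists t0 : R, 0 < t0 /\
    forall t : R, t0 <= t ->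
      \tr (vertigo t A) != 0 /\ state_n (vertigo_norm t A).
Proof.
move=> [HA0 trA] Hnn; have HA : adjmx A = A := HA0.
set sg := A ord_max ord_max in Hnn.
have sgr : sg^* = sg by rewrite /sg -conjcE -{2}HA mxE.
set B := sg^-1 *: A.
have HB : adjmx B = B.
  by rewrite /B adjmxZ HA conjCV sgr.
have HB1 : B ord_max ord_max = 1 by rewrite mxE mulVf.
have AB : A = sg *: B by rewrite scalerA divff // scale1r.
exists (1 + \sum_i T0 B i); split.
  by apply: lt_le_trans ltr01 _; rewrite lerDl sumr_ge0 // => i _; exact: T0_ge0.
move=> t tt; have [trpos psdV] := core HB HB1 tt.
have VA : vertigo t A = sg *: vertigo t B by rewrite {1}AB vertigoZ.
have trA' : \tr (vertigo t A) = sg * \tr (vertigo t B) by rewrite VA mxtraceZ.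
split; first by rewrite trA' mulf_neq0 // gt_eqF.
have -> : vertigo_norm t A = (\tr (vertigo t B))^-1 *: vertigo t B.
  by rewrite /vertigo_norm trA' VA scalerA invfM mulrAC mulVf // mul1r.
set V := vertigo t B in trpos psdV *.
have c0 : 0 < (\tr V)^-1 by rewrite invr_gt0.
split; first split.
- by rewrite /Defs.hermitian adjmxZ vertigo_herm // geC0_conj // ltW.
- by rewrite mxtraceZ mulVf // gt_eqF.
move=> v; rewrite -scalemxAr -scalemxAl mxE.
by rewrite mulr_ge0 // ltW.
Qed.
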